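(* Let $f_0\in\mathbb{R}$, $g\in\mathbb{R}^n$, $H$ a symmetric $n\times n$ matrix, $\sigma>0$, and $m(s)=f_0+\langle g,s\rangle+\frac12\langle Hs,s\rangle+\frac16\sigma\|s\|^3$. Suppose $s\in\mathbb{R}^n$ and $\beta\ge0$ satisfy $m(0)-m(s)\ge\beta$. Then $$\|s\|\le\frac{\frac12\|H\|_{r,2}+\sqrt{\|H\|_{r,2}^2+\frac23\sigma\|g\|_{r,1}}}{\frac13\sigma}.$$ Moreover, if $\beta>0$, then: if $\lambda_r[H]<0$, $$\|s\|\ge\frac{\sqrt{\|g\|_{r,1}^2+2\beta|\lambda_r[H]|}-\|g\|_{r,1}}{|\lambda_r[H]|};$$ and if $\lambda_r[H]\ge0$, then $g\neq0$ and $\|s\|\ge\beta/\|g\|_{r,1}$.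
   Context: $\|\cdot\|$ is an arbitrary (possibly non-smooth) norm on $\mathbb{R}^n$, $\langle\cdot,\cdot\rangle$ the Euclidean inner product, $\|v\|_{r,1}=\max_{\|s\|=1}|\langle v,s\rangle|$ the dual norm, and for a symmetric matrix $H$, $\|H\|_{r,2}=\max_{\|v\|=1}|\langle Hv,v\rangle|$ and $\lambda_r[H]=\min_{\|v\|=1}\langle Hv,v\rangle$. *)

(* Defs.v *)
From HB Require Import structures.
From mathcomp Require Import all_boot all_order all_algebra.
From mathcomp Require Import classical_sets reals.
Set Implicit Arguments. Unset Strict Implicit. Unset Printing Implicit Defensive.
Import Order.TTheory GRing.Theory Num.Theory.
Local Open Scope ring_scope.
Local Open Scope classical_set_scope.

Section Defs.
Variables (R : realType) (n : nat).

Definition inner (u v : 'cV[R]_n) : R := \sum_(i < n) u i 0 * v i 0.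

Definition is_norm (nrm : 'cV[R]_n -> R) : Prop :=
  [/\ forall x, 0 <= nrm x,
      forall x, nrm x = 0 -> x = 0,
      forall (a : R) x, nrm (a *: x) = `|a| * nrm x
    & forall x y, nrm (x + y) <= nrm x + nrm y].

(* Dual norm  ||v||_{r,1} = max_{||s||=1} |<v,s>|  (max = sup, attained by compactness). *)
Definition dual_norm (nrm : 'cV[R]_n -> R) (v : 'cV[R]_n) : R :=
  sup [set `|inner v s| | s in [set s | nrm s = 1]].

Definition mat_norm (nrm : 'cV[R]_n -> R) (H : 'M[R]_n) : R :=
  sup [set `|inner (H *m v) v| | v in [set v | nrm v = 1]].

Definition lambda_r (nrm : 'cV[R]_n -> R) (H : 'M[R]_n) : R :=
  inf [set inner (H *m v) v | v in [set v | nrm v = 1]].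

Definition cubic_model (nrm : 'cV[R]_n -> R) (f0 : R) (g : 'cV[R]_n)
  (H : 'M[R]_n) (sigma : R) (s : 'cV[R]_n) : R :=
  f0 + inner g s + 2^-1 * inner (H *m s) s + 6^-1 * sigma * nrm s ^+ 3.

End Defs.

(* Main.v *)
Require Import Defs.
From HB Require Import structures.
From mathcomp Require Import all_boot all_order all_algebra.
From mathcomp Require Import all_classical all_reals.
From mathcomp Require Import topology normedtype derive.
Import Order.TTheory GRing.Theory Num.Theory.
Import numFieldNormedType.Exports.
From mathcomp Require Import lra ring.
Local Open Scope ring_scope.
Local Open Scope classical_set_scope.

Lemma rv_entry_le (R : realType) n (v : 'rV[R]_n) i : `|v ord0 i| <= `|v|.
Proof.
rewrite (_ : `|v| = mx_norm v)// mx_normrE.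
by apply/bigmax_geP; right => /=; exists (ord0, i).
Qed.

Section NE.
Set Implicit Arguments.
Variables (R : realType) (n : nat) (nrm : 'cV[R]_n -> R).
Hypothesis Hn : is_norm nrm.

Lemma nrm0 : nrm 0 = 0.
Proof. case: Hn => _ _ hZ _. by rewrite -(scale0r 0) hZ normr0 mul0r. Qed.

Lemma nrm_ge0 x : 0 <= nrm x. Proof. by case: Hn. Qed.
Lemma nrmZ a x : nrm (a *: x) = `|a| * nrm x. Proof. by case: Hn. Qed.
Lemma nrmD x y : nrm (x + y) <= nrm x + nrm y. Proof. by case: Hn. Qed.
Lemma nrmN x : nrm (- x) = nrm x.
Proof. by rewrite -scaleN1r nrmZ normrN1 mul1r. Qed.

Lemma nrm_sum (I : finType) (F : I -> 'cV[R]_n) :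
  nrm (\sum_i F i) <= \sum_i nrm (F i).
Proof.
elim/big_rec2: _ => [|i y1 y2 _ h]; first by rewrite nrm0.
by apply: le_trans (nrmD _ _) _; rewrite lerD2l.
Qed.

Definition K0 := \sum_(i < n) nrm (delta_mx i 0).

Lemma nrm_up (v : 'rV[R]_n) : nrm v^T <= `|v| * K0.
Proof.
rewrite {1}(matrix_sum_delta v^T).
under eq_bigr => i _ do rewrite big_ord1.
apply: le_trans (nrm_sum _ _) _.
rewrite /K0 big_distrr /=; apply: ler_sum => i _.
rewrite nrmZ mxE; apply: ler_wpM2r; first exact: nrm_ge0.
exact: rv_entry_le.
Qed.


Lemma K0_ge0 : 0 <= K0.
Proof. by apply: sumr_ge0 => i _; exact: nrm_ge0. Qed.

Definition fr (v : 'rV[R]_n) := nrm v^T.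

Lemma fr_cont : continuous fr.
Proof.
move=> x; apply/(cvgrPdist_le (FF := nbhs_filter x)) => e e0.
have hd : 0 < e / (K0 + 1) by rewrite divr_gt0 // ltr_wpDl // K0_ge0.
have : \forall t \near x, `|x - t| < e / (K0 + 1).
  by apply/nbhs_normP; exists (e / (K0 + 1)).
apply: filterS => t /ltW ht.
have h1 : `|fr x - fr t| <= fr (x - t).
  have t1 : nrm x^T <= nrm (x - t)^T + nrm t^T.
    by rewrite -{1}(subrK t x) linearD; exact: nrmD.
  have t2 : nrm t^T <= nrm (x - t)^T + nrm x^T.
    rewrite -{1}(subrK x t) linearD /= -opprB linearN /= -(nrmN (x - t)^T).
    exact: nrmD.
  rewrite /fr ler_norml; apply/andP; split; lra.
apply: le_trans h1 _; apply: le_trans (nrm_up _) _.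
apply: le_trans (ler_wpM2r K0_ge0 ht) _.
have k1 : 0 < K0 + 1 by rewrite ltr_pwDr // K0_ge0.
rewrite mulrAC ler_pdivrMr //.
by rewrite ler_wpM2l ?ltW //; lra.
Qed.


Lemma norm_lb : exists2 C : R, 0 <= C & forall (x : 'cV[R]_n) (i : 'I_n), `|x i 0| <= C * nrm x.
Proof.
have [[i0 _]|ni] := pselect (exists i : 'I_n, True); last first.
  by exists 0 => // x i; exfalso; apply: ni; exists i.
pose A := [set v : 'rV[R]_n | `|v| = 1].
have A0 : A !=set0.
  have v0 : delta_mx ord0 i0 != 0 :> 'rV[R]_n.
    apply/eqP => /matrixP /(_ ord0 i0); rewrite !mxE !eqxx /=.
    by move/eqP; rewrite oner_eq0.
  by exists (`|delta_mx ord0 i0 : 'rV[R]_n|^-1 *: delta_mx ord0 i0); exact: normfZV.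
have cA : compact A.
  apply: bounded_closed_compact.
    rewrite /= /bounded_near; near=> M => v /= -> /=; near: M.
    by apply: nbhs_pinfty_ge; rewrite real1.
  have -> : A = (@Num.norm _ _) @^-1` [set 1] by [].
  apply: preimage_closed; last exact: closed_eq.
  move=> y _; exact: norm_continuous.
have [c cA' cmin] := compact_EVT_min A0 cA (continuous_subspaceT fr_cont).
have Ac : `|c| = 1 by move: cA'; rewrite inE.
have m0 : 0 < fr c.
  rewrite lt_def nrm_ge0 andbT; apply/eqP; case: Hn => _ h0 _ _ /h0 c0.
  by move: Ac; rewrite -(trmxK c) c0 trmx0 normr0 => /eqP; rewrite eq_sym oner_eq0.
exists (fr c)^-1; first by rewrite invr_ge0 ltW.
move=> x i.
have [v0|vn0] := eqVneq x^T 0.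
  have -> : x = 0 by rewrite -(trmxK x) v0 trmx0.
  by rewrite mxE normr0 nrm0 mulr0.
have := cmin (`|x^T|^-1 *: x^T); rewrite inE => /(_ (normfZV vn0)).
rewrite /fr linearZ /= trmxK nrmZ normrV ?unitfE ?normr_eq0 // normr_id.
move=> h.
have nx0 : 0 < `|x^T| by rewrite normr_gt0.
have : `|x^T| <= (fr c)^-1 * nrm x.
  rewrite /fr -(ler_pM2l m0) mulrA mulfV ?gt_eqF // mul1r.
  rewrite -(ler_pM2r nx0) mulrAC mulVf ?gt_eqF // mul1r in h.
  by apply: le_trans h; rewrite mulrC.
apply: le_trans.
by have := @rv_entry_le R n x^T i; rewrite mxE.
Unshelve. all: by end_near.
Qed.


Lemma inner_scale (u v : 'cV[R]_n) a : inner u (a *: v) = a * inner u v.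
Proof.
rewrite /inner big_distrr; apply: eq_bigr => i _; rewrite mxE /=; exact: mulrCA.
Qed.

Lemma inner0r (u : 'cV[R]_n) : inner u 0 = 0.
Proof. by rewrite -(scale0r 0) inner_scale mul0r. Qed.

Lemma inner0l (u : 'cV[R]_n) : inner 0 u = 0.
Proof. by rewrite /inner big1 // => i _; rewrite mxE mul0r. Qed.

Lemma innerH (M : 'M[R]_n) v a :
  inner (M *m (a *: v)) (a *: v) = a ^+ 2 * inner (M *m v) v.
Proof.
rewrite inner_scale -scalemxAr /inner big_distrr /= big_distrr /=.
apply: eq_bigr => i _; rewrite mxE; ring.
Qed.

Lemma inner_bound (C : R) (w v : 'cV[R]_n) : 0 <= C ->
  (forall (x : 'cV[R]_n) (i : 'I_n), `|x i 0| <= C * nrm x) ->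
  `|inner w v| <= (\sum_i `|w i 0|) * (C * nrm v).
Proof.
move=> C0 hC; rewrite /inner big_distrl /=.
apply: le_trans (ler_norm_sum _ _ _) _; apply: ler_sum => i _.
by rewrite normrM ler_wpM2l.
Qed.

Lemma sup_ge0 (S : set R) : has_ubound S -> (forall x, S x -> 0 <= x) ->
  0 <= sup S.
Proof.
move=> hu h; have [[x Sx]|] := pselect (S !=set0).
  by apply: le_trans (h _ Sx) _; apply: sup_upper_bound => //; split => //; exists x.
move=> ne; have -> : S = set0 by apply/seteqP; split => // x Sx; apply: ne; exists x.
by rewrite sup0.
Qed.

End NE.

Theorem lemma5p4 (R : realType) (n : nat) (nrm : 'cV[R]_n -> R)
  (Hnrm : is_norm nrm) (f0 : R) (g : 'cV[R]_n) (H : 'M[R]_n)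
  (Hsym : H^T = H) (sigma : R) (Hsigma : 0 < sigma)
  (s : 'cV[R]_n) (beta : R) (Hbeta : 0 <= beta)
  (Hdec : cubic_model nrm f0 g H sigma 0 - cubic_model nrm f0 g H sigma s >= beta) :
  nrm s <= (2^-1 * mat_norm nrm H
            + Num.sqrt (mat_norm nrm H ^+ 2 + 2 / 3 * sigma * dual_norm nrm g))
           / (3^-1 * sigma)
  /\ (0 < beta ->
      (lambda_r nrm H < 0 ->
         nrm s >= (Num.sqrt (dual_norm nrm g ^+ 2 + 2 * beta * `|lambda_r nrm H|)
                   - dual_norm nrm g) / `|lambda_r nrm H|)
      /\ (0 <= lambda_r nrm H ->
         g != 0 /\ nrm s >= beta / dual_norm nrm g)).
Proof.
have [C C0 hC] := norm_lb Hnrm.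
set G := dual_norm nrm g; set M := mat_norm nrm H; set L := lambda_r nrm H.
pose Bg := (\sum_i `|g i 0|) * C.
pose BH := (\sum_i \sum_j `|H i j|) * C * C.
have Bvec : forall w v, `|inner w v| <= (\sum_i `|w i 0|) * (C * nrm v).
  by move=> w v; apply: inner_bound.
have BHv : forall v, `|inner (H *m v) v| <= BH * nrm v ^+ 2.
  move=> v; apply: le_trans (Bvec _ _) _.
  have e1 : \sum_i `|(H *m v) i 0| <= (\sum_i \sum_j `|H i j|) * C * nrm v.
    rewrite -!mulrA big_distrl /=; apply: ler_sum => i _.
    rewrite mxE; apply: le_trans (ler_norm_sum _ _ _) _.
    rewrite big_distrl /=; apply: ler_sum => j _.
    by rewrite normrM ler_wpM2l.
  have Ct : 0 <= C * nrm v by rewrite mulr_ge0 ?nrm_ge0.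
  apply: le_trans (ler_wpM2r Ct e1) _.
  rewrite le_eqVlt; apply/orP; left; apply/eqP; rewrite /BH; ring.
set SG := [set `|inner g u| | u in [set u | nrm u = 1]].
set SH := [set `|inner (H *m u) u| | u in [set u | nrm u = 1]].
set SL := [set inner (H *m u) u | u in [set u | nrm u = 1]].
have ubG : has_ubound SG.
  exists Bg => _ [u /= u1 <-]; apply: le_trans (Bvec _ _) _; by rewrite u1 mulr1.
have ubH : has_ubound SH.
  exists BH => _ [u /= u1 <-]; apply: le_trans (BHv _) _; by rewrite u1 expr1n mulr1.
have lbL : has_lbound SL.
  exists (- BH) => _ [u /= u1 <-]; rewrite lerNl.
  apply: le_trans (ler_norm _) _; rewrite normrN (le_trans (BHv _)) //.
  by rewrite u1 expr1n mulr1.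
have G0 : 0 <= G by apply: sup_ge0 => // _ [u _ <-].
have M0 : 0 <= M by apply: sup_ge0 => // _ [u _ <-].
have unit : forall v, v != 0 -> nrm ((nrm v)^-1 *: v) = 1 /\ 0 < nrm v.
  move=> v v0; have nv : 0 < nrm v.
    rewrite lt_def nrm_ge0 // andbT; apply: contra v0 => /eqP.
    by case: Hnrm => _ h _ _ /h ->.
  split=> //; rewrite nrmZ // normrV ?unitfE ?gt_eqF // gtr0_norm // mulVf ?gt_eqF //.
have hG : forall v, `|inner g v| <= G * nrm v.
  move=> v; have [->|v0] := eqVneq v 0; first by rewrite inner0r nrm0 // normr0 mulr0.
  have [u1 nv] := unit v v0.
  have : `|inner g ((nrm v)^-1 *: v)| <= G.
    by apply: sup_upper_bound; [split => //; exists `|inner g ((nrm v)^-1 *: v)|; exists ((nrm v)^-1 *: v) | exists ((nrm v)^-1 *: v)].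
  rewrite inner_scale normrM normrV ?unitfE ?gt_eqF // gtr0_norm // => h.
  by rewrite -ler_pdivrMr // mulrC.
have hH : forall v, `|inner (H *m v) v| <= M * nrm v ^+ 2.
  move=> v; have [->|v0] := eqVneq v 0.
    by rewrite inner0r nrm0 // normr0 expr0n mulr0.
  have [u1 nv] := unit v v0.
  have : `|inner (H *m ((nrm v)^-1 *: v)) ((nrm v)^-1 *: v)| <= M.
    by apply: sup_upper_bound; [split => //; eexists; exists ((nrm v)^-1 *: v) | exists ((nrm v)^-1 *: v)].
  rewrite innerH normrM exprVn normrV ?unitfE ?expf_neq0 ?gt_eqF // gtr0_norm ?exprn_gt0 // => h.
  by rewrite -ler_pdivrMr ?exprn_gt0 // mulrC.
have hL : forall v, L * nrm v ^+ 2 <= inner (H *m v) v.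
  move=> v; have [->|v0] := eqVneq v 0.
    by rewrite inner0r nrm0 // expr0n mulr0.
  have [u1 nv] := unit v v0.
  have : L <= inner (H *m ((nrm v)^-1 *: v)) ((nrm v)^-1 *: v).
    by apply: ge_inf => //; exists ((nrm v)^-1 *: v).
  rewrite innerH exprVn => h.
  have nv2 : 0 < nrm v ^+ 2 by rewrite exprn_gt0.
  by rewrite -ler_pdivlMr // mulrC.
rewrite /cubic_model mulmx0 inner0r (nrm0 Hnrm) in Hdec.
rewrite expr0n /= mulr0 in Hdec.
set t := nrm s in Hdec *; set a := inner g s in Hdec; set q := inner (H *m s) s in Hdec.
have t0 : 0 <= t by apply: nrm_ge0.
have ha := hG s; have hq := hH s; have hl := hL s.
rewrite -/t -/a in ha; rewrite -/t -/q in hq hl.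
move/ler_normlP: ha => [ha1 ha2]; move/ler_normlP: hq => [hq1 hq2].
have c0 : 0 <= 6^-1 * sigma * t ^+ 3.
  by apply: mulr_ge0; [apply: mulr_ge0; [rewrite invr_ge0; lra | lra] | exact: exprn_ge0].
set c := 6^-1 * sigma * t ^+ 3 in Hdec c0.
have Hd : beta <= - a - 2^-1 * q - c.
  by move: Hdec; rewrite inner0r mulr0; lra.
have s3 : 0 < 3^-1 * sigma by apply: mulr_gt0; [rewrite invr_gt0; lra | lra].
have D0 : 0 <= Num.sqrt (M ^+ 2 + 2 / 3 * sigma * G) by apply: sqrtr_ge0.
set D := Num.sqrt (M ^+ 2 + 2 / 3 * sigma * G) in D0 *.
have DD : D ^+ 2 = M ^+ 2 + 2 / 3 * sigma * G.
  rewrite /D sqr_sqrtr //; apply: addr_ge0; [exact: sqr_ge0 | apply: mulr_ge0 => //; apply: mulr_ge0; lra].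
have M2 : 0 <= M ^+ 2 by apply: sqr_ge0.
split.
  have [tz|tpos] := eqVneq t 0.
    rewrite tz; apply: divr_ge0; last exact: ltW.
    apply: addr_ge0 => //; apply: mulr_ge0 => //; rewrite invr_ge0; lra.
  have tpos' : 0 < t by rewrite lt_def tpos t0.
  have key : sigma * t ^+ 2 - 3 * M * t - 6 * G <= 0.
    rewrite -(pmulr_rle0 _ tpos').
    have -> : t * (sigma * t ^+ 2 - 3 * M * t - 6 * G)
       = 6 * c - 3 * (M * t ^+ 2) - 6 * (G * t) by rewrite /c; field.
    lra.
  have h2 : (t * (3^-1 * sigma) - 2^-1 * M) ^+ 2 <= D ^+ 2.
    have k2 : sigma * (sigma * t ^+ 2 - 3 * M * t - 6 * G) <= 0.
      by rewrite pmulr_rle0.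
    have -> : (t * (3^-1 * sigma) - 2^-1 * M) ^+ 2
      = 9^-1 * (sigma * (sigma * t ^+ 2 - 3 * M * t - 6 * G)) + 2 / 3 * sigma * G
        + 4^-1 * M ^+ 2 by field.
    rewrite DD; lra.
  have h3 : t * (3^-1 * sigma) - 2^-1 * M <= D.
    have := ler_wsqrtr h2; rewrite !sqrtr_sqr (ger0_norm D0).
    by apply: le_trans; apply: ler_norm.
  rewrite ler_pdivlMr //; lra.
move=> bpos.
have tpos : 0 < t.
  rewrite lt_def t0 andbT; apply/eqP => tz.
  have e1 : G * t = 0 by rewrite tz mulr0.
  have e2 : M * t ^+ 2 = 0 by rewrite tz expr0n mulr0.
  have e3 : c = 0 by rewrite /c tz expr0n mulr0.
  have : beta <= 0 by lra.
  by rewrite leNgt bpos.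
split.
  move=> Lneg.
  have aL : `|L| = - L by rewrite ltr0_norm.
  have Lp : 0 < `|L| by rewrite normr_gt0 lt_eqF.
  rewrite ler_pdivrMr //.
  have hb : beta <= G * t + 2^-1 * (`|L| * t ^+ 2) by rewrite aL; lra.
  have hb2 := ler_wpM2l (ltW Lp) hb.
  have hX : G ^+ 2 + 2 * beta * `|L| <= (`|L| * t + G) ^+ 2.
    have -> : (`|L| * t + G) ^+ 2
      = G ^+ 2 + 2 * (`|L| * (G * t + 2^-1 * (`|L| * t ^+ 2))) by field.
    lra.
  have pos : 0 <= `|L| * t + G by apply: addr_ge0 => //; apply: mulr_ge0.
  have := ler_wsqrtr hX; rewrite sqrtr_sqr (ger0_norm pos).
  rewrite [t * _]mulrC; lra.
move=> Lnn.
have qnn : 0 <= q by apply: le_trans hl; rewrite mulr_ge0 ?sqr_ge0.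
have bG : beta <= G * t by lra.
have Gpos : 0 < G.
  rewrite lt_def G0 andbT; by apply/eqP => Gz; move: bG; rewrite Gz mul0r leNgt bpos.
split.
  apply/eqP => gz.
  have a0 : a = 0 by rewrite /a gz inner0l.
  have : beta <= 0 by lra.
  by rewrite leNgt bpos.
by rewrite ler_pdivrMr // mulrC.
Qed.
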